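(* Let $q>1$ be prime and $0<j\le q$. Then $\bar{\mathsf{L}}^j_q$ is the unique logic strongly maximal with respect to $\mathsf{CPL}$ that extends $\mathsf{L}^j_q$; in fact, $\bar{\mathsf{L}}^j_q$ is the only finitary structural logic $L$ with ${\vDash_{\mathsf{L}^j_q}}\subsetneq{\vdash_L}\subsetneq{\vDash_{\mathsf{CPL}}}$.
   Context: $\mathbf{ŁV}_{n+1}=(\{0,\frac1n,\dots,1\},\neg,\to)$ with $\neg x=1-x$, $x\to y=\min\{1,1-x+y\}$. $F_{j/q}=\{x:x\ge j/q\}$; $\mathsf{L}^j_q=\langle\mathbf{ŁV}_{q+1},F_{j/q}\rangle$; $\bar{\mathsf{L}}^j_q=\langle\mathbf{ŁV}_{q+1}\times\mathbf{ŁV}_2,F_{j/q}\times\{1\}\rangle$; $\mathsf{CPL}=\langle\mathbf{ŁV}_2,\{1\}\rangle$. Matrix consequence: every evaluation sending the premises into the designated set sends the conclusion into it. $L_1$ is strongly maximal w.r.t. $L_2$ if ${\vdash_{L_1}}\subsetneq{\vdash_{L_2}}$ and adding to $L_1$ (as a structural rule, closed under substitution) any finitary rule valid in $L_2$ but not in $L_1$ yields exactly $L_2$. *)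

(* Defs.v *)
From Stdlib Require List.
From mathcomp Require Import all_boot.
Set Implicit Arguments. Unset Strict Implicit. Unset Printing Implicit Defensive.

Inductive fm : Type :=
| Var : nat -> fm
| Neg : fm -> fm
| Imp : fm -> fm -> fm.

Fixpoint subst (s : nat -> fm) (f : fm) : fm :=
  match f with
  | Var n => s n
  | Neg a => Neg (subst s a)
  | Imp a b => Imp (subst s a) (subst s b)
  end.

Definition fset := fm -> Prop.
Definition crel := fset -> fm -> Prop.
Definition set_of_seq (s : seq fm) : fset := fun f => List.In f s.

Record matrix := Matrix {
  carrier : Type;
  mneg : carrier -> carrier;
  mimp : carrier -> carrier -> carrier;
  desig : carrier -> Prop }.

Fixpoint eval (M : matrix) (v : nat -> carrier M) (f : fm) : carrier M :=
  match f with
  | Var n => v n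
  | Neg a => mneg (eval v a)
  | Imp a b => mimp (eval v a) (eval v b)
  end.

Definition mcons (M : matrix) : crel := fun G f =>
  forall v : nat -> carrier M,
    (forall g, G g -> desig (eval v g)) -> desig (eval v f).

(** Łukasiewicz algebra ŁV_{n+1} on {0,1/n,...,1}; x : 'I_n.+1 encodes x/n. *)
Definition lneg (n : nat) (x : 'I_n.+1) : 'I_n.+1 := inord (n - x).
Definition limp (n : nat) (x y : 'I_n.+1) : 'I_n.+1 := inord (minn n (n - x + y)).

Definition Lmat (q j : nat) : matrix :=
  @Matrix 'I_q.+1 (@lneg q) (@limp q) (fun x => j <= x).

Definition Lbarmat (q j : nat) : matrix :=
  @Matrix ('I_q.+1 * 'I_2)%type
    (fun x => (lneg x.1, lneg x.2))
    (fun x y => (limp x.1 y.1, limp x.2 y.2))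
    (fun x => j <= x.1 /\ 1 <= x.2).

Definition CPLmat : matrix := @Matrix 'I_2 (@lneg 1) (@limp 1) (fun x => 1 <= x).

Definition is_logic (R : crel) : Prop :=
  (forall (G : fset) f, G f -> R G f) /\
  (forall (G D : fset) f, (forall g, G g -> D g) -> R G f -> R D f) /\
  (forall (G D : fset) f, (forall g, D g -> R G g) -> R D f -> R G f) /\
  (forall (s : nat -> fm) (G : fset) f,
      R G f -> R (fun g => exists2 h, G h & g = subst s h) (subst s f)).

Definition finitary (R : crel) : Prop :=
  forall G f, R G f ->
    exists2 G0 : seq fm, (forall g, List.In g G0 -> G g) & R (set_of_seq G0) f.

Definition finitary_logic (R : crel) : Prop := is_logic R /\ finitary R.

Definition crel_incl (R1 R2 : crel) : Prop := forall G f, R1 G f -> R2 G f.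
Definition crel_eq (R1 R2 : crel) : Prop := forall G f, R1 G f <-> R2 G f.
Definition crel_sincl (R1 R2 : crel) : Prop := crel_incl R1 R2 /\ ~ crel_incl R2 R1.

Definition rule := (seq fm * fm)%type.
Definition valid_rule (R : crel) (r : rule) : Prop := R (set_of_seq r.1) r.2.

Definition extend_by (R : crel) (r : rule) : crel := fun G f =>
  forall R', is_logic R' -> crel_incl R R' -> valid_rule R' r -> R' G f.

Definition strongly_maximal (R1 R2 : crel) : Prop :=
  crel_sincl R1 R2 /\
  forall r : rule, valid_rule R2 r -> ~ valid_rule R1 r ->
    crel_eq (extend_by R1 r) R2.

(* Main.v *)
Require Import Defs.
From mathcomp Require Import all_boot.
From mathcomp Require Import zify.
From Stdlib Require Import Classical ClassicalEpsilon.
Set Implicit Arguments. Unset Strict Implicit. Unset Printing Implicit Defensive.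

Lemma eval_ext (M : matrix) (v v' : nat -> carrier M) f :
  (forall n, v n = v' n) -> eval v f = eval v' f.
Proof. move=> H; elim: f => [n|a IH|a IHa b IHb] /=; by rewrite ?H ?IH ?IHa ?IHb. Qed.

Lemma eval_subst (M : matrix) (v : nat -> carrier M) s f :
  eval v (subst s f) = eval (fun n => eval v (s n)) f.
Proof. elim: f => [n|a IH|a IHa b IHb] //=; by rewrite ?IH ?IHa ?IHb. Qed.

Fixpoint vb (k : nat) (f : fm) : bool :=
  match f with Var n => n < k | Neg a => vb k a | Imp a b => vb k a && vb k b end.

Fixpoint maxv (f : fm) : nat :=
  match f with Var n => n | Neg a => maxv a | Imp a b => maxn (maxv a) (maxv b) end.

Lemma vb_maxv k f : maxv f < k -> vb k f.
Proof.
elim: f => [n|a IH|a IHa b IHb] /= H //; first exact: IH.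
apply/andP; split; [apply: IHa|apply: IHb]; lia.
Qed.

Lemma eval_agree (M : matrix) (v v' : nat -> carrier M) k f :
  vb k f -> (forall i, i < k -> v i = v' i) -> eval v f = eval v' f.
Proof.
move=> Hf H; elim: f Hf => [n|a IH|a IHa b IHb] /=.
- exact: H.
- by move=> /IH ->.
- by move=> /andP[/IHa -> /IHb ->].
Qed.

Lemma vb_subst k s f : (forall n, vb k (s n)) -> vb k (subst s f).
Proof. move=> H; elim: f => [n|a IH|a IHa b IHb] //=; by rewrite IHa IHb. Qed.

Lemma mcons_logic M : is_logic (mcons M).
Proof.
split; [|split; [|split]].
- move=> G f Gf v Hv; exact: Hv.
- move=> G D f GD H v Hv; apply: H => g Gg; apply: Hv; exact: GD.
- move=> G D f HD H v Hv; apply: H => g Dg; exact: HD g Dg v Hv.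
- move=> s G f H v Hv; rewrite eval_subst; apply: H => g Gg.
  rewrite -eval_subst; apply: Hv; by exists g.
Qed.

Section Compact.
Variable M : matrix.
Local Notation A := (carrier M).
Variables (G : fset) (f : fm).

Definition upd (p : nat -> A) (n : nat) (a : A) : nat -> A :=
  fun i => if i == n then a else p i.

Definition good (p : nat -> A) (n : nat) : Prop :=
  forall G0 : seq fm, (forall g, List.In g G0 -> G g) ->
    exists v : nat -> A, (forall i, i < n -> v i = p i) /\
      (forall g, List.In g G0 -> desig (eval v g)) /\ ~ desig (eval v f).

Variable el : seq A.
Hypothesis Hel : forall x, List.In x el.

Lemma good_step p n : good p n -> exists a, good (upd p n a) n.+1.
Proof.
move=> Hg; apply: NNPP => Hno.
have H1 : forall a, exists G0 : seq fm, (forall g, List.In g G0 -> G g) /\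
   forall v : nat -> A, (forall i, i < n.+1 -> v i = upd p n a i) ->
     (forall g, List.In g G0 -> desig (eval v g)) -> desig (eval v f).
{ move=> a; apply: NNPP => H; apply: Hno; exists a => G0 HG0.
  apply: NNPP => H2; apply: H; exists G0; split => // v Hv Hs; apply: NNPP => Hf.
  apply: H2; by exists v. }
pose Gf a := proj1_sig (constructive_indefinite_description _ (H1 a)).
have HGf a : (forall g, List.In g (Gf a) -> G g) /\
   forall v : nat -> A, (forall i, i < n.+1 -> v i = upd p n a i) ->
     (forall g, List.In g (Gf a) -> desig (eval v g)) -> desig (eval v f).
  exact: proj2_sig (constructive_indefinite_description _ (H1 a)).
have [v [Hv [Hs Hf]]] := Hg (List.flat_map Gf el) (fun g Hg' =>
   let: ex_intro a (conj _ Ha) := proj1 (List.in_flat_map _ _ _) Hg' in proj1 (HGf a) g Ha).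
apply: Hf; apply: (proj2 (HGf (v n))).
- move=> i Hi; rewrite /upd; case: eqP => [->//|Hne]; apply: Hv; lia.
- move=> g Hg'; apply: Hs; apply/List.in_flat_map; by exists (v n).
Qed.

Section Build.
Variable p0 : nat -> A.
Hypothesis Hg0 : good p0 0.

Definition stepf (p : nat -> A) (n : nat) (H : good p n) : {a | good (upd p n a) n.+1} :=
  constructive_indefinite_description _ (good_step H).

Fixpoint build (n : nat) : {p | good p n} :=
  match n with
  | 0 => exist _ p0 Hg0
  | m.+1 => let (p, H) := build m in
            exist _ (upd p m (proj1_sig (stepf H))) (proj2_sig (stepf H))
  end.

Lemma build_S m : exists a, proj1_sig (build m.+1) = upd (proj1_sig (build m)) m a.
Proof. rewrite /=; case: (build m) => p H /=; by eexists. Qed.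

Definition vstar (i : nat) : A := proj1_sig (build i.+1) i.

Lemma build_vstar m i : i < m -> proj1_sig (build m) i = vstar i.
Proof.
elim: m => [//|m IH] Hi.
case: (ltngtP i m) => [lt|gt|->]; last by [].
- have [a ->] := build_S m; rewrite /upd ifN; last by rewrite neq_ltn lt.
  exact: IH.
- lia.
Qed.
End Build.

Lemma compact_aux : mcons M G f ->
  exists2 G0 : seq fm, (forall g, List.In g G0 -> G g) & mcons M (set_of_seq G0) f.
Proof.
move=> H; apply: NNPP => Hno.
have Hgood : forall p, good p 0.
{ move=> p G0 HG0; apply: NNPP => Hn; apply: Hno; exists G0 => // v Hv.
  apply: NNPP => Hf; apply: Hn; exists v; split => //; split => // g Hg; exact: Hv. }
have [v0 _] : exists v : nat -> A, True.
{ apply: NNPP => Hn; apply: Hno; exists nil => // v; exfalso; apply: Hn; by exists v. }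
pose vs := vstar (Hgood v0).
have Hagree : forall g, vb (maxn (maxv g) (maxv f)).+1 g -> G g -> desig (eval vs g) /\ ~ desig (eval vs f).
{ move=> g Hvb Gg.
  set m := (maxn (maxv g) (maxv f)).+1.
  have [v [Hv [Hs Hf]]] := proj2_sig (build (Hgood v0) m) [:: g]
     (fun g' (Hg' : List.In g' [:: g]) => match Hg' with or_introl e => eq_ind g G Gg g' e | or_intror F => False_ind _ F end).
  have Heq : forall i, i < m -> v i = vs i.
  { move=> i Hi; rewrite Hv //; exact: build_vstar. }
  split.
  - rewrite -(eval_agree Hvb Heq); apply: Hs; by left.
  - rewrite -(@eval_agree _ v vs m f) //; apply: vb_maxv; rewrite /m; lia. }
have Hf : ~ desig (eval vs f).
{ set m := (maxv f).+1.
  have [v [Hv [_ Hf]]] := proj2_sig (build (Hgood v0) m) nil (fun g (Hg : List.In g nil) => False_ind _ Hg).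
  rewrite -(@eval_agree _ v vs m f) //; first by apply: vb_maxv.
  move=> i Hi; rewrite Hv //; exact: build_vstar. }
apply: Hf; apply: H => g Gg; apply: (proj1 (Hagree g _ Gg)); apply: vb_maxv; lia.
Qed.
End Compact.

Lemma in_seqP (T : eqType) (x : T) (s : seq T) : x \in s -> List.In x s.
Proof. elim: s => [//|y s IH]; rewrite inE => /orP[/eqP->|/IH]; [by left|by right]. Qed.


Definition top a := Imp a a.
Definition bot a := Neg (top a).
Definition minus a b := Neg (Imp a b).
Definition oplus a b := Imp (Neg a) b.
Definition wedge a b := minus a (minus a b).
Definition vee a b := Imp (Imp a b) b.
Definition odot a b := Neg (oplus (Neg a) (Neg b)).
Fixpoint opow r a := match r with 0 => bot a | r'.+1 => oplus a (opow r' a) end.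
Fixpoint dpow r a := match r with 0 => top a | r'.+1 => odot a (dpow r' a) end.

Lemma arith_hh (q x : nat) : 1 < q -> x <= q ->
  minn x ((q + q.-1 * (q - x)) - q.-1 * q) = (x == 1).
Proof.
case: q => [|[|Q]] // _ Hx /=.
case: x Hx => [|[|x]] Hx /=; first by lia.
- rewrite subSS subn0; nia.
- rewrite subSS; nia.
Qed.

Section Luk.
Variables (q j : nat).
Local Notation ev := (@eval (Lmat q j)).

Lemma ev_neg v a : nat_of_ord (ev v (Neg a)) = q - ev v a.
Proof. by rewrite /= /lneg inordK // ltnS leq_subr. Qed.

Lemma ev_imp v a b : nat_of_ord (ev v (Imp a b)) = minn q (q - ev v a + ev v b).
Proof. by rewrite /= /limp inordK // ltnS geq_minl. Qed.

Lemma ev_le v a : ev v a <= q.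
Proof. by rewrite -ltnS ltn_ord. Qed.

Ltac evs := rewrite ?ev_neg ?ev_imp; have := ev_le.

Lemma ev_top v a : nat_of_ord (ev v (top a)) = q.
Proof. rewrite ev_imp; have := ev_le v a; lia. Qed.
Lemma ev_bot v a : nat_of_ord (ev v (bot a)) = 0.
Proof. by rewrite ev_neg ev_top subnn. Qed.
Lemma ev_minus v a b : nat_of_ord (ev v (minus a b)) = ev v a - ev v b.
Proof. rewrite ev_neg ev_imp; have := ev_le v a; have := ev_le v b; lia. Qed.
Lemma ev_oplus v a b : nat_of_ord (ev v (oplus a b)) = minn q (ev v a + ev v b).
Proof. rewrite ev_imp ev_neg; have := ev_le v a; have := ev_le v b; lia. Qed.
Lemma ev_wedge v a b : nat_of_ord (ev v (wedge a b)) = minn (ev v a) (ev v b).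
Proof. rewrite !ev_minus; lia. Qed.
Lemma ev_vee v a b : nat_of_ord (ev v (vee a b)) = maxn (ev v a) (ev v b).
Proof. rewrite !ev_imp; have := ev_le v a; have := ev_le v b; lia. Qed.
Lemma ev_odot v a b : nat_of_ord (ev v (odot a b)) = (ev v a + ev v b) - q.
Proof. rewrite ev_neg ev_oplus !ev_neg; have := ev_le v a; have := ev_le v b; lia. Qed.
Lemma ev_opow v r a : nat_of_ord (ev v (opow r a)) = minn q (r * ev v a).
Proof.
elim: r => [|r IH] /=; first by rewrite ev_bot mul0n; lia.
rewrite ev_oplus IH mulSn; lia.
Qed.
Lemma ev_dpow v r a : nat_of_ord (ev v (dpow r a)) = (q + r * ev v a) - r * q.
Proof.
elim: r => [|r IH] /=; first by rewrite ev_top !mul0n; lia.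
rewrite ev_odot IH !mulSn; have := ev_le v a; lia.
Qed.

Definition hh (a : fm) := wedge a (dpow q.-1 (Neg a)).
Lemma ev_hh v a : 1 < q -> nat_of_ord (ev v (hh a)) = (nat_of_ord (ev v a) == 1).
Proof.
move=> hq; rewrite ev_wedge ev_dpow ev_neg.
exact: arith_hh (ev_le v a).
Qed.

Lemma ev_cl v f : (forall n, nat_of_ord (v n) = 0 \/ nat_of_ord (v n) = q) ->
  nat_of_ord (ev v f) = 0 \/ nat_of_ord (ev v f) = q.
Proof.
move=> H; elim: f => [n|a IH|a IHa b IHb]; first exact: H.
- rewrite ev_neg; lia.
- rewrite ev_imp; lia.
Qed.

Section Gen.
Variable d : 'I_q.+1.
Definition Reach (m : nat) := exists t, nat_of_ord (ev (fun _ => d) t) = m.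

Lemma reach_minus a b : Reach a -> Reach b -> Reach (a - b).
Proof. move=> [t1 H1] [t2 H2]; exists (minus t1 t2); by rewrite ev_minus H1 H2. Qed.

Lemma reach_gcd n a b : a + b <= n -> Reach a -> Reach b -> Reach (gcdn a b).
Proof.
elim: n a b => [|n IH] a b Hab Ra Rb.
  have -> : a = 0 by lia.
  by rewrite gcd0n.
case: (posnP a) => [->|Ha]; first by rewrite gcd0n.
case: (posnP b) => [->|Hb]; first by rewrite gcdn0.
case: (leqP a b) => Hle.
- have -> : b = a + (b - a) by lia.
  rewrite gcdnDl; apply: IH => //; [lia | exact: reach_minus].
- rewrite gcdnC.
  have -> : a = b + (a - b) by lia.
  rewrite gcdnDl; apply: IH => //; [lia | exact: reach_minus].
Qed.

Lemma gen : prime q -> 0 < d < q -> Reach 1.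
Proof.
move=> hq /andP[H0 H1].
have <- : gcdn d q = 1.
{ rewrite gcdnC; apply/eqP; rewrite -/(coprime q d) prime_coprime //.
  apply/negP => /(dvdn_leq H0); lia. }
apply: (@reach_gcd (d + q)) => //.
- by exists (Var 0).
- by exists (top (Var 0)); rewrite ev_top.
Qed.
End Gen.

Lemma E_ex : prime q -> exists E, forall d : 'I_q.+1,
  nat_of_ord (ev (fun _ => d) E) = ((0 < d) && (d < q)).
Proof.
move=> hq; have q1 : 1 < q by exact: prime_gt1.
have inv : forall n, exists t, forall d : 'I_q.+1,
   nat_of_ord (ev (fun _ => d) t) <= 1 /\ (0 < d < q -> d <= n -> nat_of_ord (ev (fun _ => d) t) = 1) /\
   ((nat_of_ord d == 0) || (nat_of_ord d == q) -> nat_of_ord (ev (fun _ => d) t) = 0).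
{ elim => [|n [t Ht]].
  - exists (bot (Var 0)) => d; rewrite ev_bot; split => //; split => //; lia.
  - case: (ltnP n.+1 q) => Hn.
    + have Hd0 : nat_of_ord (inord n.+1 : 'I_q.+1) = n.+1 by rewrite inordK //; lia.
      have [e He] := @gen (inord n.+1) hq ltac:(rewrite Hd0; lia).
      exists (vee t (hh e)) => d; rewrite ev_vee ev_hh //.
      have [T1 [T2 T3]] := Ht d.
      split; first by case: (_ == 1); lia.
      split.
      * move=> Hi Hdn; case: (ltnP d n.+1) => Hlt; first by rewrite T2 //; lia.
        have Hde : d = inord n.+1 by apply/val_inj; rewrite /= Hd0; lia.
        rewrite Hde He /=; rewrite Hde in T1; lia.
      * move=> Hc; rewrite T3 //.
        have := @ev_cl (fun _ => d) e (fun _ => ltac:(lia)).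
        case: eqP => //; lia.
    + exists t => d; have [T1 [T2 T3]] := Ht d; split => //; split => // Hi _; apply: T2 => //; lia. }
have [t Ht] := inv q; exists t => d; have [T1 [T2 T3]] := Ht d.
have := ev_le (fun _ => d) (Var 0); rewrite /= => Hdq.
case: (boolP ((0 < d) && (d < q))) => Hi.
- by apply: T2 => //; lia.
- apply: T3; lia.
Qed.
End Luk.


Fixpoint bigv (F : nat -> fm) k :=
  match k with 0 => bot (Var 0) | k'.+1 => vee (F k') (bigv F k') end.
Definition tw E k w := bigv (fun i => subst (fun _ => Var i) (opow w E)) k.
Definition del q x := opow q (wedge x (Neg x)).
Definition Dk q k := bigv (fun i => del q (Var i)) k.
Definition tt q E k w (b : bool) :=
  if b then oplus (tw E k w) (Neg (Dk q k)) else tw E k w.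

Lemma bigv0 F : bigv F 0 = bot (Var 0). Proof. by []. Qed.
Lemma bigvS F k : bigv F k.+1 = vee (F k) (bigv F k). Proof. by []. Qed.

Lemma vb_bigv k F : 0 < k -> (forall i, i < k -> vb k (F i)) -> vb k (bigv F k).
Proof.
move=> Hk HF; suff : forall m, m <= k -> vb k (bigv F m) by apply.
elim => [|m IH] Hm /=; first by rewrite Hk.
rewrite HF // IH //; lia.
Qed.

Lemma vb_subst_var k i f : i < k -> vb k (subst (fun _ => Var i) f).
Proof. move=> Hi; by apply: vb_subst. Qed.

Lemma vb_opow k r a : vb k (opow r a) = vb k a.
Proof. elim: r => [|r IH] /=; first by rewrite andbb. by rewrite IH andbb. Qed.

Lemma vb_tt q E k w b : 0 < k -> vb k (tt q E k w b).
Proof.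
move=> Hk; have H1 : vb k (tw E k w).
{ apply: vb_bigv => // i Hi; exact: vb_subst_var. }
case: b => //=; rewrite H1 /=.
apply: vb_bigv => // i Hi /=; by rewrite vb_opow /= !Hi.
Qed.

Lemma ttT q E k w : tt q E k w true = oplus (tw E k w) (Neg (Dk q k)). Proof. by []. Qed.
Lemma ttF q E k w : tt q E k w false = tw E k w. Proof. by []. Qed.

Definition interior (q x : nat) := (0 < x) && (x < q).

Section Luk2.
Variables (q j : nat) (E : fm).
Local Notation ev := (@eval (Lmat q j)).
Hypothesis HE : forall d : 'I_q.+1, nat_of_ord (ev (fun _ => d) E) = interior q d.

Lemma bigv_le v F k w : (forall i, i < k -> ev v (F i) <= w) -> ev v (bigv F k) <= w.
Proof. elim: k => [|k IH] H; first by rewrite bigv0 ev_bot. rewrite bigvS ev_vee geq_max H // IH // => i Hi; apply: H; lia. Qed.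

Lemma bigv_eq v F k w : (forall i, i < k -> ev v (F i) <= w) ->
  (exists i, i < k /\ nat_of_ord (ev v (F i)) = w) -> ev v (bigv F k) = w :> nat.
Proof.
elim: k => [|k IH] H [i [Hi Hw]]; first by [].
rewrite bigvS ev_vee; case: (ltngtP i k) => Hik.
- have := IH (fun i' (Hi' : i' < k) => H i' ltac:(lia)) (ex_intro _ i (conj Hik Hw)); have := H k (leqnn _); lia.
- lia.
- move: Hw; rewrite Hik => Hw; have := @bigv_le v F k w (fun i' Hi' => H i' ltac:(lia)); lia.
Qed.

Lemma bigv_0 v F k : (forall i, i < k -> nat_of_ord (ev v (F i)) = 0) -> ev v (bigv F k) = 0 :> nat.
Proof. move=> H; have := @bigv_le v F k 0 (fun i Hi => eq_leq (H i Hi)); lia. Qed.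

Lemma ev_Ew v i w : w <= q ->
  nat_of_ord (ev v (subst (fun _ => Var i) (opow w E))) = if interior q (v i) then w else 0.
Proof.
move=> Hw; rewrite eval_subst (@eval_ext _ _ (fun _ => v i)) // ev_opow HE.
case: (interior q (v i)); lia.
Qed.

Lemma ev_del v x : nat_of_ord (ev v (del q x)) = if interior q (ev v x) then q else 0.
Proof.
rewrite ev_opow ev_wedge ev_neg /interior.
have := ev_le v x; move: (nat_of_ord (ev v x)) => y Hy.
case: (boolP ((0 < y) && (y < q))) => /= H.
- have : 1 <= minn y (q - y) by lia.
  move: (minn y (q - y)) => m Hm; have := leq_pmulr q Hm; lia.
- have -> : minn y (q - y) = 0 by lia.
  by rewrite muln0; lia.
Qed.

Definition NC k (v : nat -> 'I_q.+1) := exists i, i < k /\ interior q (v i).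
Definition CL k (v : nat -> 'I_q.+1) := forall i, i < k -> ~~ interior q (v i).

Lemma tw_nc v k w : w <= q -> NC k v -> nat_of_ord (ev v (tw E k w)) = w.
Proof.
move=> Hw [i [Hi Hin]]; apply: bigv_eq.
- move=> i' _; rewrite ev_Ew //; case: interior; lia.
- exists i; split => //; by rewrite ev_Ew // Hin.
Qed.

Lemma tw_cl v k w : w <= q -> CL k v -> nat_of_ord (ev v (tw E k w)) = 0.
Proof. move=> Hw H; apply: bigv_0 => i Hi; by rewrite ev_Ew // (negbTE (H i Hi)). Qed.

Lemma Dk_nc v k : NC k v -> nat_of_ord (ev v (Dk q k)) = q.
Proof.
move=> [i [Hi Hin]]; apply: bigv_eq.
- move=> i' _; rewrite ev_del; case: interior; lia.
- exists i; split => //; by rewrite ev_del /= Hin.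
Qed.

Lemma Dk_cl v k : CL k v -> nat_of_ord (ev v (Dk q k)) = 0.
Proof. move=> H; apply: bigv_0 => i Hi; by rewrite ev_del /= (negbTE (H i Hi)). Qed.

Lemma tt_nc v k w b : w <= q -> NC k v -> nat_of_ord (ev v (tt q E k w b)) = w.
Proof.
move=> Hw H; case: b; last by rewrite ttF; exact: tw_nc.
rewrite ttT ev_oplus ev_neg tw_nc // Dk_nc //; lia.
Qed.

Lemma tt_cl v k w b : w <= q -> CL k v -> nat_of_ord (ev v (tt q E k w b)) = if b then q else 0.
Proof.
move=> Hw H; case: b; last by rewrite ttF; exact: tw_cl.
rewrite ttT ev_oplus ev_neg tw_cl // Dk_cl //; lia.
Qed.
End Luk2.


Lemma cpl_neg v a : nat_of_ord (@eval CPLmat v (Neg a)) = 1 - @eval CPLmat v a.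
Proof. by rewrite /= /lneg inordK // ltnS leq_subr. Qed.
Lemma cpl_imp v a b : nat_of_ord (@eval CPLmat v (Imp a b)) =
  minn 1 (1 - @eval CPLmat v a + @eval CPLmat v b).
Proof. by rewrite /= /limp inordK // ltnS geq_minl. Qed.
Lemma cpl_le v a : @eval CPLmat v a <= 1.
Proof. by rewrite -ltnS ltn_ord. Qed.

Section Emb.
Variables (q j : nat).
Local Notation ev := (@eval (Lmat q j)).
Definition emb (x : 'I_2) : 'I_q.+1 := inord (x * q).
Lemma emb_val x : nat_of_ord (emb x) = x * q.
Proof. rewrite /emb inordK //; case: x => [[|[|]]] //= _; lia. Qed.

Lemma emb_ev_val (u : nat -> 'I_2) f :
  nat_of_ord (ev (fun n => emb (u n)) f) = nat_of_ord (emb (@eval CPLmat u f)).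
Proof.
elim: f => [n|a IH|a IHa b IHb] //.
- rewrite ev_neg IH !emb_val cpl_neg.
  have := cpl_le u a; case: (nat_of_ord (@eval CPLmat u a)) => [|[|]] //= _; lia.
- rewrite ev_imp IHa IHb !emb_val cpl_imp.
  have := cpl_le u a; have := cpl_le u b.
  case: (nat_of_ord (@eval CPLmat u a)) => [|[|]] //=;
  case: (nat_of_ord (@eval CPLmat u b)) => [|[|]] //= _ _; lia.
Qed.

Lemma emb_ev (u : nat -> 'I_2) f : ev (fun n => emb (u n)) f = emb (@eval CPLmat u f).
Proof. apply/val_inj; exact: emb_ev_val. Qed.

Lemma evbar w f : @eval (Lbarmat q j) w f =
  (ev (fun n => (w n).1) f, @eval CPLmat (fun n => (w n).2) f).
Proof.
elim: f => [n|a IH|a IHa b IHb] /=; first by case: (w n).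
- by rewrite IH.
- by rewrite IHa IHb.
Qed.

Definition cls (x : 'I_q.+1) : 'I_2 := inord (nat_of_ord x == q).
Lemma emb_cls x : 0 < q -> (nat_of_ord x = 0 \/ nat_of_ord x = q) -> emb (cls x) = x.
Proof.
move=> q0 H; apply/val_inj => /=; rewrite emb_val /cls inordK; last by case: (_ == _).
case: H => ->; [by rewrite (_ : (0 == q) = false) //; lia | by rewrite eqxx mul1n].
Qed.
End Emb.


Section Model.
Variables (q j : nat) (E : fm).
Hypothesis hq : prime q.
Hypothesis hj : 0 < j <= q.
Local Notation ev := (@eval (Lmat q j)).
Hypothesis HE : forall d : 'I_q.+1, nat_of_ord (ev (fun _ => d) E) = interior q d.
Variable L : crel.
Hypothesis HL : is_logic L.
Hypothesis HML : crel_incl (mcons (Lmat q j)) L.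
Variables (D : seq fm) (psi : fm).
Hypothesis Hnot : ~ L (set_of_seq D) psi.

Let q1 : 1 < q := prime_gt1 hq.
Let k := (foldr maxn (maxv psi) (map maxv D)).+1.

Lemma vbD g : List.In g D -> vb k g.
Proof.
move=> Hg; apply: vb_maxv; rewrite /k ltnS.
elim: D Hg => [//|d D' IH] /= [->|/IH H]; lia.
Qed.
Lemma vbpsi : vb k psi.
Proof. apply: vb_maxv; rewrite /k ltnS; elim: D => [|d D' IH] /=; lia. Qed.

Let T g := L (set_of_seq D) g.
Definition SS (v : nat -> 'I_q.+1) := forall g, vb k g -> T g -> j <= ev v g.

Lemma K1 chi : vb k chi -> (forall v, SS v -> j <= ev v chi) -> T chi.
Proof.
move=> Hvb H; apply: NNPP => Hn.
have [_ [_ [Hcut _]]] := HL.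
have Hm : ~ mcons (Lmat q j) T chi.
{ move=> Hm; apply: Hn; apply: (Hcut _ T) => //; exact: HML. }
apply: Hm => v Hv; apply: H => g _ Tg; exact: Hv.
Qed.

Lemma K2 (G : fset) phi s : L G phi -> (forall r, vb k (s r)) ->
  (forall g, G g -> forall v, SS v -> j <= ev v (subst s g)) ->
  forall v, SS v -> j <= ev v (subst s phi).
Proof.
move=> HG Hs Hprem v Hv; apply: Hv; first exact: vb_subst.
have [_ [_ [Hcut Hst]]] := HL.
apply: (Hcut _ (fun g => exists2 h, G h & g = subst s h)); last exact: Hst.
move=> g [h Gh ->]; apply: K1; first exact: vb_subst.
exact: Hprem.
Qed.

Lemma K3 v : SS v -> forall g, List.In g D -> j <= ev v g.
Proof. move=> Hv g Hg; apply: Hv; [exact: vbD | have [Hr _] := HL; exact: Hr]. Qed.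

Lemma K4 : exists v, SS v /\ ~ j <= ev v psi.
Proof.
apply: NNPP => H; apply: Hnot; apply: K1; first exact: vbpsi.
move=> v Hv; apply: NNPP => Hn; apply: H; by exists v.
Qed.

Lemma NC_or_CL (v : nat -> 'I_q.+1) : NC k v \/ CL k v.
Proof.
case: (classic (NC k v)) => H; [by left | right => i Hi; apply/negP => Hin; apply: H; by exists i].
Qed.

Lemma CL_emb (v : nat -> 'I_q.+1) g : CL k v -> vb k g -> ev v g = emb q (@eval CPLmat (fun n => cls (v n)) g).
Proof.
move=> Hc Hg; rewrite -emb_ev; apply: (eval_agree Hg) => i Hi.
rewrite emb_cls //; first lia.
have := Hc i Hi; have := ltn_ord (v i); rewrite /interior /=; lia.
Qed.

Lemma emb_desig (x : 'I_2) : j <= emb q x -> 1 <= x.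
Proof. rewrite emb_val; case: x => [[|[|]]] //= _; lia. Qed.

Lemma lemA : (forall v, SS v -> NC k v) -> crel_incl L (mcons (Lmat q j)).
Proof.
move=> Hnc G phi HG w0 Hw0.
pose s r := tt q E k (w0 r) false.
have Hs : forall v, SS v -> forall g, ev v (subst s g) = ev w0 g.
{ move=> v Hv g; rewrite eval_subst; apply: eval_ext => r; apply/val_inj.
  apply: tt_nc => //; [by rewrite -ltnS ltn_ord | exact: Hnc]. }
have [v [Hv _]] := K4.
rewrite -(Hs v Hv); apply: (K2 HG) => //.
- move=> r; apply: vb_tt; rewrite /k; lia.
- move=> g Gg v' Hv'; rewrite Hs //; exact: Hw0.
Qed.

Lemma lemB : (exists v, SS v /\ NC k v) -> (exists v, SS v /\ CL k v) ->
  crel_incl L (mcons (Lbarmat q j)).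
Proof.
move=> [vn [Hvn Hn]] [vc [Hvc Hc]] G phi HG w Hw.
pose s r := tt q E k (w r).1 (nat_of_ord (w r).2 == 1).
have Hs1 : forall v, NC k v -> forall g, ev v (subst s g) = ev (fun n => (w n).1) g.
{ move=> v Hv g; rewrite eval_subst; apply: eval_ext => r; apply/val_inj.
  apply: tt_nc => //; by rewrite -ltnS ltn_ord. }
have Hs2 : forall v, CL k v -> forall g, ev v (subst s g) = emb q (@eval CPLmat (fun n => (w n).2) g).
{ move=> v Hv g; rewrite eval_subst -emb_ev; apply: eval_ext => r; apply/val_inj.
  rewrite [LHS](@tt_cl q j E HE) //; last by rewrite -ltnS ltn_ord.
  rewrite [RHS]emb_val; case: (w r).2 => [[|[|]]] //= _; lia. }
have Hvbs : forall r, vb k (s r) by move=> r; apply: vb_tt; rewrite /k; lia.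
have Hprem : forall g, G g -> forall v, SS v -> j <= ev v (subst s g).
{ move=> g Gg v Hv; have := Hw g Gg; rewrite /= evbar /= => [[H1 H2]].
  case: (NC_or_CL v) => Hv'; first by rewrite Hs1.
  rewrite Hs2 // emb_val; have := cpl_le (fun n => (w n).2) g; nia. }
rewrite /= evbar /=; split.
- rewrite -(Hs1 vn Hn); exact: K2 HG Hvbs Hprem vn Hvn.
- apply: emb_desig; rewrite -(Hs2 vc Hc); exact: K2 HG Hvbs Hprem vc Hvc.
Qed.

Lemma lemC : (forall v, SS v -> CL k v) -> ~ mcons CPLmat (set_of_seq D) psi.
Proof.
move=> Hcl Hm; have [v [Hv Hpsi]] := K4.
have Hc := Hcl v Hv.
have H := Hm (fun n => cls (v n)) (fun g Hg => emb_desig (eq_ind _ (fun x => j <= x) (K3 Hv Hg) _ (congr1 val (CL_emb Hc (vbD Hg))))).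
apply: Hpsi; rewrite (CL_emb Hc vbpsi) emb_val.
move: H; rewrite /=; case: (@eval CPLmat _ psi) => [[|[|]]] //= _ _; lia.
Qed.

Lemma lemD : (exists v, SS v /\ CL k v) -> ~ mcons (Lbarmat q j) (set_of_seq D) psi.
Proof.
move=> [vc [Hvc Hc]] Hm; have [v [Hv Hpsi]] := K4.
have H := Hm (fun n => (v n, cls (vc n))).
apply: Hpsi; suff : j <= (@eval (Lbarmat q j) (fun n => (v n, cls (vc n))) psi).1.
  by rewrite evbar.
apply: (proj1 (H _)) => g Hg; rewrite /= evbar /=; split.
- have := K3 Hv Hg; exact. 
apply: emb_desig; rewrite -(CL_emb Hc (vbD Hg)); have := K3 Hvc Hg; exact.
Qed.
End Model.


Section Main.
Variables (q j : nat).
Hypothesis hq : prime q.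
Hypothesis hj : 0 < j <= q.
Let q1 : 1 < q := prime_gt1 hq.
Local Notation M := (mcons (Lmat q j)).
Local Notation B := (mcons (Lbarmat q j)).
Local Notation C := (mcons CPLmat).

Lemma trich L D psi : is_logic L -> crel_incl M L -> ~ L (set_of_seq D) psi ->
  ~ C (set_of_seq D) psi \/ crel_incl L M \/ (crel_incl L B /\ ~ B (set_of_seq D) psi).
Proof.
move=> HL HML Hn; have [E HE] := E_ex j hq.
set k := (foldr maxn (maxv psi) [seq maxv i | i <- D]).+1.
case: (classic (exists v : nat -> 'I_q.+1, SS j L D psi v /\ NC k v)) => Hnc.
- case: (classic (exists v : nat -> 'I_q.+1, SS j L D psi v /\ CL k v)) => Hcl.
  + right; right; split; [exact: (lemB hq hj HE HL HML Hnc Hcl) | exact: (lemD hq hj HL HML Hn Hcl)].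
  + right; left; apply: (lemA hq hj HE HL HML Hn) => v Hv.
    apply: NNPP => H; apply: Hcl; exists v; split => // i Hi; apply/negP => Hin; apply: H; by exists i.
- left; apply: (lemC hq hj HL HML Hn) => v Hv i Hi; apply/negP => Hin; apply: Hnc; exists v; split => //; by exists i.
Qed.

Lemma compC G f : C G f -> exists2 G0 : seq fm, (forall g, List.In g G0 -> G g) & C (set_of_seq G0) f.
Proof. apply: (@compact_aux CPLmat G f (enum 'I_2)) => x; apply: in_seqP; by rewrite mem_enum. Qed.

Lemma compB G f : B G f -> exists2 G0 : seq fm, (forall g, List.In g G0 -> G g) & B (set_of_seq G0) f.
Proof.
move=> H; have Hel : forall x : carrier (Lbarmat q j), List.In x (enum {: 'I_q.+1 * 'I_2}).
  move=> x; apply: in_seqP; by rewrite mem_enum.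
exact: (compact_aux Hel H).
Qed.

Lemma emb0 (x : 'I_2) : nat_of_ord (emb q x) = 0 -> nat_of_ord x = 0.
Proof. rewrite emb_val; case: x => [[|[|]]] //= _; lia. Qed.

Lemma del_cpl u : nat_of_ord (@eval CPLmat u (del q (Var 0))) = 0.
Proof.
apply: emb0; rewrite -(emb_ev q j) ev_del /= emb_val /interior.
by case: (u 0) => [[|[|]]] //= _; rewrite ?mul0n ?mul1n ?ltnn ?andbF.
Qed.

Lemma emb_des (x : 'I_2) : j <= emb q x -> 0 < x.
Proof. rewrite emb_val; case: x => [[|[|]]] //= _; lia. Qed.

Lemma incl_MC : crel_incl M C.
Proof.
move=> G f H u Hu; apply: emb_des.
rewrite -(emb_ev q j); apply: H => g Gg; rewrite /= emb_ev emb_val.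
have := Hu g Gg; rewrite /=; have := cpl_le u g; nia.
Qed.

Lemma incl_MB : crel_incl M B.
Proof.
move=> G f H w Hw; rewrite /= evbar /=; split.
- apply: H => g Gg; have := Hw g Gg; by rewrite /= evbar /= => -[].
- apply: (incl_MC H) => g Gg; have := Hw g Gg; by rewrite /= evbar /= => -[].
Qed.

Lemma incl_BC : crel_incl B C.
Proof.
move=> G f H u Hu; have := H (fun n => (emb q (u n), u n)); rewrite /= evbar /=.
case; last by [].
move=> g Gg; rewrite /= evbar /=; split; last exact: Hu.
rewrite emb_ev emb_val; have := Hu g Gg; rewrite /=; have := cpl_le u g; nia.
Qed.

Definition r0 : rule := ([:: del q (Var 0)], bot (Var 0)).
Definition r1 : rule := ([::], Neg (del q (Var 0))).

Lemma r0B : valid_rule B r0.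
Proof.
move=> w Hw; exfalso; have := Hw (del q (Var 0)) (or_introl erefl).
rewrite /= evbar /= => -[_]; by rewrite del_cpl.
Qed.

Lemma r0M : ~ valid_rule M r0.
Proof.
have H1 : nat_of_ord (inord 1 : 'I_q.+1) = 1 by rewrite inordK //; lia.
move=> H; have Hd : forall x, desig (m:=Lmat q j) x = (j <= x) by [].
have Hp : forall g, set_of_seq r0.1 g -> desig (m:=Lmat q j) (eval (M:=Lmat q j) (fun _ => inord 1) g).
  move=> g [<-|//]; rewrite Hd ev_del /interior H1 q1 /=; lia.
have := H _ Hp; rewrite Hd ev_bot; lia.
Qed.

Lemma r1C : valid_rule C r1.
Proof. move=> u _; by rewrite /= cpl_neg del_cpl. Qed.

Lemma r1B : ~ valid_rule B r1.
Proof.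
have H1 : nat_of_ord (inord 1 : 'I_q.+1) = 1 by rewrite inordK //; lia.
move=> H; have := H (fun _ => (inord 1, ord0)); rewrite /= evbar /=.
case => //; rewrite ev_neg ev_del /= /interior H1 q1 subnn; lia.
Qed.

Lemma mono L (G G' : fset) f : is_logic L -> (forall g, G g -> G' g) -> L G f -> L G' f.
Proof. move=> [_ [Hm _]] H; exact: Hm. Qed.

Lemma main4 R : is_logic R -> crel_incl M R -> ~ crel_incl R M ->
  (exists G f, C G f /\ ~ R G f) -> crel_eq R B.
Proof.
move=> HR HMR HRM [G1 [f1 [HC1 HR1]]].
have HRB : crel_incl R B.
{ have [G1' HG1' HC1'] := compC HC1.
  have Hn : ~ R (set_of_seq G1') f1 by move=> H; apply: HR1; exact: mono HR HG1' H.
  case: (trich HR HMR Hn) => [//|[//|[]//]]. }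
move=> G f; split; first exact: HRB.
move=> HB; have [G0 HG0 HB0] := compB HB.
apply: (mono HR HG0); apply: NNPP => Hn.
case: (trich HR HMR Hn) => [H|[//|[_ H]]]; apply: H => //; exact: incl_BC.
Qed.

Lemma sincl_MB : crel_sincl M B.
Proof. split; first exact: incl_MB. move=> H; apply: r0M; apply: H; exact: r0B. Qed.

Lemma sincl_BC : crel_sincl B C.
Proof. split; first exact: incl_BC. move=> H; apply: r1B; apply: H; exact: r1C. Qed.

Lemma smax_B : strongly_maximal B C.
Proof.
split; first exact: sincl_BC.
move=> r HrC HrB G f; split.
- move=> H; apply: (H C); [exact: mcons_logic | exact: incl_BC | exact: HrC].
- move=> HC R' HR' HBR Hr; have [G0 HG0 HC0] := compC HC.
  apply: (mono HR' HG0); apply: NNPP => Hn.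
  have HMR : crel_incl M R' by move=> G' f' H'; apply: HBR; exact: incl_MB H'.
  case: (trich HR' HMR Hn) => [//|[H|[H _]]]; apply: HrB.
  + apply: incl_MB; exact: H.
  + exact: H.
Qed.

Lemma part2 R : finitary_logic R -> crel_incl M R -> strongly_maximal R C -> crel_eq R B.
Proof.
move=> [HR _] HMR [[HRC HCR] Hsm].
apply: main4 => //.
- move=> HRM.
  have H := Hsm r0 (incl_BC r0B) (fun H => r0M (HRM _ _ H)).
  apply: (proj2 sincl_BC) => G f HC; apply: (proj2 (H G f) HC B).
  + exact: mcons_logic.
  + move=> G' f' /HRM; exact: incl_MB.
  + exact: r0B.
- apply: NNPP => Hn; apply: HCR => G f HC; apply: NNPP => HnR; apply: Hn; by exists G, f.
Qed.

Lemma part4 R : finitary_logic R -> crel_sincl M R -> crel_sincl R C -> crel_eq R B.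
Proof.
move=> [HR _] [HMR HRM] [HRC HCR]; apply: main4 => //.
apply: NNPP => Hn; apply: HCR => G f HC; apply: NNPP => HnR; apply: Hn; by exists G, f.
Qed.
End Main.

Theorem corollary5p8 (q j : nat) (hq : prime q) (hj : 0 < j <= q) :
  (* \bar L^j_q extends L^j_q and is strongly maximal w.r.t. CPL *)
  (crel_incl (mcons (Lmat q j)) (mcons (Lbarmat q j)) /\
   strongly_maximal (mcons (Lbarmat q j)) (mcons CPLmat)) /\
  (* it is the unique such (finitary structural) logic *)
  (forall R : crel, finitary_logic R ->
     crel_incl (mcons (Lmat q j)) R -> strongly_maximal R (mcons CPLmat) ->
     crel_eq R (mcons (Lbarmat q j))) /\
  (* it lies strictly between L^j_q and CPL ... *)
  (crel_sincl (mcons (Lmat q j)) (mcons (Lbarmat q j)) /\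
   crel_sincl (mcons (Lbarmat q j)) (mcons CPLmat)) /\
  (* ... and is the only finitary structural logic doing so *)
  (forall R : crel, finitary_logic R ->
     crel_sincl (mcons (Lmat q j)) R -> crel_sincl R (mcons CPLmat) ->
     crel_eq R (mcons (Lbarmat q j))).
Proof.
split; [split; [exact: incl_MB | exact: smax_B hq hj]|].
split; [move=> R HR HMR Hsm; exact: (part2 hq hj HR HMR Hsm)|].
split; [split; [exact: sincl_MB hq hj | exact: sincl_BC hq hj]|].
move=> R HR HMR Hsm; exact: (part4 hq hj HR HMR Hsm).
Qed.
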